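(* Let $X$ be a finite dimensional real or complex Banach space, $K\subseteq B_X$ a Borel set, and $\mu$ an admissible probability measure on $K$. Then there is a point $\psi_0\in S_{X^*}$, depending on $\mu$, such that for every $n\in\mathbb N$ $$\mathbf c_n(X)\le \exp\left\{-n\int_K\log|\langle x,\psi_0\rangle|\,d\mu(x)\right\}.$$
   Context: For a Banach space $Y$, $B_Y$ and $S_Y$ denote its closed unit ball and unit sphere. For a Banach space $X$ over $\mathbb K\in\{\mathbb R,\mathbb C\}$ and $n\in\mathbb N$, $\mathbf c_n(X)$ is the smallest constant such that for all $\psi_1,\dots,\psi_n\in X^*$, $\|\psi_1\|\cdots\|\psi_n\|\le \mathbf c_n(X)\,\|\psi_1\cdots\psi_n\|$, where $\psi_1\cdots\psi_n$ is the pointwise product and $\|P\|=\sup_{x\in S_X}|P(x)|$. Admissibility: a Borel measure $\mu$ on a Borel set $K\subseteq B_X$ is admissible if $\int_K\log|\langle x,\psi\rangle|\,d\mu(x)$ is finite for every $\psi\in S_{X^*}$ and the functions $g_m(\psi)=\int_K\max\{\log|\langle x,\psi\rangle|,-m\}\,d\mu(x)$ converge uniformly on $S_{X^*}$, as $m\to\infty$, to $g(\psi)=\int_K\log|\langle x,\psi\rangle|\,d\mu(x)$. *)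

(* Defs.v *)
From HB Require Import structures.
From mathcomp Require Import all_boot all_order all_algebra.
From mathcomp Require Import all_classical all_reals all_analysis.
From mathcomp Require Import complex.

Set Implicit Arguments.
Unset Strict Implicit.
Unset Printing Implicit Defensive.

Import Order.TTheory GRing.Theory Num.Theory.
Local Open Scope classical_set_scope.
Local Open Scope ring_scope.

Inductive RorC (R : realType) : forall K : fieldType, (K -> R) -> Prop :=
  | RorC_real : @RorC R R (fun a : R => `|a|)
  | RorC_complex : @RorC R R[i] (@ComplexField.Normc.normc R).

Section Defs.
Variables (R : realType) (K : fieldType) (absK : K -> R) (d : nat).

(* The finite dimensional space X is K^d (row vectors) with a norm N. *)
Local Notation X := 'rV[K]_d.

Definition is_norm (N : X -> R) : Prop :=
  [/\ forall x, N x = 0 -> x = 0,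
      forall (a : K) x, N (a *: x) = absK a * N x
    & forall x y, N (x + y) <= N x + N y].

Definition norm_open (N : X -> R) (A : set X) : Prop :=
  forall x, A x -> exists e : R, 0 < e /\ [set y | N (y - x) < e] `<=` A.

Definition unit_ball (N : X -> R) : set X := [set x | N x <= 1].
Definition unit_sphere (N : X -> R) : set X := [set x | N x = 1].

(* sup-norm on the unit sphere: ||P|| = sup_{x in S_X} |P(x)|;
   for a linear functional this is its dual norm *)
Definition supnorm (N : X -> R) (f : X -> K) : R :=
  sup [set absK (f x) | x in unit_sphere N].

Definition elog (t : R) : \bar R := if t == 0 then -oo%E else (ln t)%:E.

(* c_n(X): the smallest constant c with
   ||psi_1|| ... ||psi_n|| <= c ||psi_1 ... psi_n|| for all psi_i in X^*
   (infimum in the extended reals, +oo if no such constant exists) *)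
Definition cconst (N : X -> R) (n : nat) : \bar R :=
  ereal_inf [set c%:E | c in [set c : R | forall psi : 'I_n -> {scalar X},
     \prod_(i < n) supnorm N (psi i)
       <= c * supnorm N (fun x => \prod_(i < n) psi i x)]].

End Defs.

(* K^d as a pointed type (point 0), needed to build the sigma-algebra *)
Definition ptrow (K : fieldType) (d : nat) : Type := 'rV[K]_d.
HB.instance Definition _ (K : fieldType) (d : nat) := Choice.on (ptrow K d).
HB.instance Definition _ (K : fieldType) (d : nat) :=
  isPointed.Build (ptrow K d) (0 : 'rV[K]_d).

Definition borelX (R : realType) (K : fieldType) (d : nat) (N : 'rV[K]_d -> R) :=
  @g_sigma_algebraType (ptrow K d) (norm_open N).

Section Admissible.
Variables (R : realType) (K : fieldType) (absK : K -> R) (d : nat)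
  (N : 'rV[K]_d -> R).
Local Notation X := (borelX N).

Definition glog (mu : {measure set X -> \bar R}) (Kset : set X)
    (psi : {scalar 'rV[K]_d}) : \bar R :=
  (\int[mu]_(x in Kset) elog (absK (psi x)))%E.

Definition glog_trunc (mu : {measure set X -> \bar R}) (Kset : set X)
    (m : nat) (psi : {scalar 'rV[K]_d}) : \bar R :=
  (\int[mu]_(x in Kset) maxe (elog (absK (psi x))) (- (m%:R)%:E))%E.

Definition admissible (mu : {measure set X -> \bar R}) (Kset : set X) : Prop :=
  (forall psi : {scalar 'rV[K]_d}, supnorm absK N psi = 1 ->
      glog mu Kset psi \is a fin_num) /\
  (forall e : R, 0 < e -> exists M : nat, forall m : nat, (M <= m)%N ->
      forall psi : {scalar 'rV[K]_d}, supnorm absK N psi = 1 ->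
      (`| glog_trunc mu Kset m psi - glog mu Kset psi | < e%:E)%E).

End Admissible.

(* Main.v *)
Require Import Defs.
From HB Require Import structures.
From mathcomp Require Import all_boot all_order all_algebra.
From mathcomp Require Import all_classical all_reals all_analysis.
From mathcomp Require Import complex.
From mathcomp Require Import ring lra.
Import Order.TTheory GRing.Theory Num.Theory.
Local Open Scope classical_set_scope.
Local Open Scope ring_scope.

Set Implicit Arguments.
Unset Strict Implicit.
Unset Printing Implicit Defensive.
Import numFieldNormedType.Exports.

Definition incr (f : nat -> nat) := forall m n, (m < n)%N -> (f m < f n)%N.
Definition to0 {R : realType} (u : nat -> R) :=
  forall e : R, 0 < e -> exists M, forall k, (M <= k)%N -> u k < e.

Section seqs.
Context {R : realType}.
Implicit Types u v : nat -> R.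

Lemma incr_ge f : incr f -> forall k, (k <= f k)%N.
Proof.
move=> fi; elim=> [//|k ih]; exact: leq_ltn_trans ih (fi _ _ (ltnSn k)).
Qed.

Lemma incr_comp f g : incr f -> incr g -> incr (f \o g).
Proof. by move=> fi gi m n mn; apply: fi; apply: gi. Qed.

Lemma incr_id : incr id. Proof. by []. Qed.

Lemma to0_sub u f : incr f -> to0 u -> to0 (u \o f).
Proof.
move=> fi hu e e0; have [M HM] := hu e e0; exists M => k Mk.
by apply: HM; apply: leq_trans Mk (incr_ge fi k).
Qed.

Lemma to0_le u v : (forall k, v k <= u k) -> to0 u -> to0 v.
Proof.
move=> vu hu e e0; have [M HM] := hu e e0; exists M => k Mk.
exact: le_lt_trans (vu k) (HM k Mk).
Qed.

Lemma to0D u v : to0 u -> to0 v -> to0 (fun k => u k + v k).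
Proof.
move=> hu hv e e0; have e20 : 0 < e / 2 by rewrite divr_gt0.
have [M1 H1] := hu _ e20; have [M2 H2] := hv _ e20.
exists (maxn M1 M2) => k Mk.
rewrite (splitr e); apply: ltrD.
  by apply: H1; apply: leq_trans Mk; rewrite leq_maxl.
by apply: H2; apply: leq_trans Mk; rewrite leq_maxr.
Qed.

Lemma to0M c u : 0 <= c -> to0 u -> to0 (fun k => c * u k).
Proof.
move=> c0 hu e e0; have ce0 : 0 < e / (c + 1) by rewrite divr_gt0// ltr_wpDl.
have [M HM] := hu _ ce0; exists M => k Mk.
have [u0|u0] := leP (u k) 0.
  by apply: le_lt_trans e0; rewrite mulr_ge0_le0.
apply: (@le_lt_trans _ _ ((c + 1) * u k)).
  by apply: ler_wpM2r; [exact: ltW | rewrite lerDl].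
by rewrite mulrC -ltr_pdivlMr ?ltr_wpDl//; apply: HM.
Qed.

Lemma to0_sum (I : eqType) (r : seq I) (u : I -> nat -> R) :
  (forall i, to0 (u i)) -> to0 (fun k => \sum_(i <- r) u i k).
Proof.
move=> hu; elim: r => [|i r ih].
  by move=> e e0; exists 0%N => k _; rewrite big_nil.
by apply: to0_le (to0D (hu i) ih) => k; rewrite big_cons.
Qed.


Lemma to0_ge u c : (forall k, c <= u k) -> to0 u -> c <= 0.
Proof.
move=> cu hu; rewrite leNgt; apply/negP => c0.
have [M HM] := hu c c0; have := HM M (leqnn M).
by rewrite ltNge cu.
Qed.

Lemma to0_inv : to0 (fun k => (k.+1%:R : R)^-1).
Proof.
move=> e e0; exists (Num.truncn (e^-1)).+1 => k Mk.
rewrite invf_plt ?posrE ?ltr0Sn//.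
apply: lt_le_trans (truncnS_gt _) _.
by rewrite ler_nat; apply: leqW.
Qed.

End seqs.

Record Good (R : realType) (K : fieldType) (absK : K -> R) : Prop := {
  g_ge0 : forall x, 0 <= absK x;
  g_eq0 : forall x, absK x = 0 -> x = 0;
  g_0 : absK 0 = 0;
  g_M : forall x y, absK (x * y) = absK x * absK y;
  g_D : forall x y, absK (x + y) <= absK x + absK y;
  g_emb : forall r : R, 0 <= r -> exists c : K, absK c = r;
  g_BW : forall (u : nat -> K) (B : R), (forall k, absK (u k) <= B) ->
      exists (f : nat -> nat) (l : K), incr f /\ to0 (fun k => absK (u (f k) - l)) }.

Lemma BW_R (R : realType) (u : nat -> R) (B : R) :
  (forall k, `|u k| <= B) ->
  exists (f : nat -> nat) (l : R), incr f /\ to0 (fun k => `|u (f k) - l|).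
Proof.
move=> uB.
have bu : bounded_fun u.
  exists B; split; first exact: num_real.
  by move=> M hM x _ /=; apply: le_trans (uB x) (ltW hM).
have [f fi /cvg_ex[l fl]] := bolzano_weierstrass bu.
exists f, l; split.
  move=> m n mn; have h : (f n <= f m)%N = (n <= m)%N := fi n m.
  by rewrite ltnNge h -ltnNge.
move=> e e0; have := (proj1 (cvgrPdist_lt _ _) fl e e0).
case=> N _ HN; exists N => k Nk; rewrite distrC; exact: (HN k Nk).
Qed.

Lemma Good_R (R : realType) : Good (fun a : R => `|a|).
Proof.
split.
- by move=> x; rewrite normr_ge0.
- by move=> x /eqP; rewrite normr_eq0 => /eqP.
- by rewrite normr0.
- by move=> x y; rewrite normrM.
- by move=> x y; rewrite ler_normD.
- by move=> r r0; exists r; rewrite ger0_norm.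
- exact: BW_R.
Qed.

Section cplx.
Local Open Scope complex_scope.
Context (R : realType).
Local Notation nc := (@ComplexField.Normc.normc R).

Lemma nc_def (a b : R) : nc (a +i* b) = Num.sqrt (a ^+ 2 + b ^+ 2).
Proof. by []. Qed.

Lemma nc_C (x : R[i]) : `|x| = ((nc x)%:C)%C.
Proof. by case: x => a b; rewrite normc_def. Qed.

Lemma nc_ge0 x : 0 <= nc x.
Proof. by case: x => a b; rewrite nc_def sqrtr_ge0. Qed.

Lemma nc_D x y : nc (x + y) <= nc x + nc y.
Proof.
have := ler_normD x y; rewrite !nc_C -rmorphD /=.
by rewrite lecR.
Qed.

Lemma nc_Re x : `|complex.Re x| <= nc x.
Proof.
case: x => a b; rewrite nc_def -sqrtr_sqr ler_wsqrtr//.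
by rewrite lerDl sqr_ge0.
Qed.

Lemma nc_Im x : `|complex.Im x| <= nc x.
Proof.
case: x => a b; rewrite nc_def -sqrtr_sqr ler_wsqrtr//.
by rewrite lerDr sqr_ge0.
Qed.

Lemma nc_le x : nc x <= `|complex.Re x| + `|complex.Im x|.
Proof.
case: x => a b; rewrite nc_def.
change (Num.sqrt (a^+2 + b^+2) <= `|a| + `|b|).
have -> : `|a| + `|b| = Num.sqrt ((`|a| + `|b|) ^+ 2).
  by rewrite sqrtr_sqr; symmetry; apply: ger0_norm; rewrite addr_ge0.
rewrite ler_sqrt ?sqr_ge0 //.
rewrite -(real_normK (num_real a)) -(real_normK (num_real b)).
have := normr_ge0 a; have := normr_ge0 b.
move: `|a| `|b| => p q p0 q0; nra.
Qed.

Lemma BW_C (u : nat -> R[i]) (B : R) : (forall k, nc (u k) <= B) ->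
  exists (f : nat -> nat) (l : R[i]), incr f /\ to0 (fun k => nc (u (f k) - l)).
Proof.
move=> uB.
have [f [l1 [fi h1]]] := @BW_R R (fun k => complex.Re (u k)) B
  (fun k => le_trans (nc_Re _) (uB k)).
have [g [l2 [gi h2]]] := @BW_R R (fun k => complex.Im (u (f k))) B
  (fun k => le_trans (nc_Im _) (uB _)).
exists (f \o g), (l1 +i* l2); split; first exact: incr_comp.
apply: to0_le (to0D (to0_sub gi h1) h2) => k /=.
apply: le_trans (nc_le _) _.
by case: (u (f (g k))) => a b.
Qed.

Lemma Good_C : Good (@ComplexField.Normc.normc R).
Proof.
split.
- exact: nc_ge0.
- exact: ComplexField.Normc.eq0_normc.
- exact: ComplexField.Normc.normc0.
- exact: ComplexField.Normc.normcM.
- exact: nc_D.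
- move=> r r0; exists (r +i* 0); rewrite nc_def expr0n /= addr0 sqrtr_sqr.
  by rewrite ger0_norm.
- exact: BW_C.
Qed.

End cplx.

Lemma RorC_Good (R : realType) (K : fieldType) (absK : K -> R) :
  RorC absK -> Good absK.
Proof. by case; [exact: Good_R | exact: Good_C]. Qed.

Section AbsSec.
Context (R : realType) (K : fieldType) (absK : K -> R) (hG : Good absK).

Lemma abs_ge0 x : 0 <= absK x. Proof. exact: (g_ge0 hG x). Qed.
Lemma abs0 : absK 0 = 0. Proof. exact: g_0 hG. Qed.
Lemma absM x y : absK (x * y) = absK x * absK y. Proof. exact: (g_M hG x y). Qed.
Lemma absD x y : absK (x + y) <= absK x + absK y. Proof. exact: (g_D hG x y). Qed.
Lemma abs_eq0 x : absK x = 0 -> x = 0. Proof. exact: (@g_eq0 _ _ _ hG x). Qed.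

Lemma abs_neq0 x : x != 0 -> absK x != 0.
Proof. by move=> x0; apply/eqP => /abs_eq0 h; rewrite h eqxx in x0. Qed.

Lemma abs1 : absK 1 = 1.
Proof.
have h : absK 1 * absK 1 = absK 1 * 1 by rewrite -absM !mulr1.
by apply: (mulfI (abs_neq0 (oner_neq0 K))).
Qed.

Lemma absN1 : absK (-1) = 1.
Proof.
have h : absK (-1) ^+ 2 = 1 by rewrite expr2 -absM mulrNN mulr1 abs1.
have := abs_ge0 (-1); move: h; move: (absK (-1)) => a h a0.
move/eqP: h; rewrite sqrf_eq1 => /orP[/eqP//|/eqP h].
by move: a0; rewrite h ler0N1.
Qed.

Lemma absN x : absK (- x) = absK x.
Proof. by rewrite -mulN1r absM absN1 mul1r. Qed.

Lemma absB x y : absK (x - y) = absK (y - x).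
Proof. by rewrite -absN opprB. Qed.

Lemma absV x : absK (x^-1) = (absK x)^-1.
Proof.
have [->|x0] := eqVneq x 0; first by rewrite invr0 abs0 invr0.
apply: (mulfI (abs_neq0 x0)); rewrite -absM divrr ?unitfE// abs1 divrr//.
by rewrite unitfE abs_neq0.
Qed.

Lemma abs_revtri x y : `|absK x - absK y| <= absK (x - y).
Proof.
have h1 := absD (x - y) y; rewrite subrK in h1.
have h2 := absD (y - x) x; rewrite subrK absB in h2.
by rewrite ler_norml; apply/andP; split; lra.
Qed.

Lemma abs_sum (I : Type) (r : seq I) (F : I -> K) :
  absK (\sum_(i <- r) F i) <= \sum_(i <- r) absK (F i).
Proof.
elim: r => [|i r ih]; first by rewrite !big_nil abs0.
by rewrite !big_cons; apply: le_trans (absD _ _) _; rewrite lerD2l.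
Qed.

Lemma abs_prod (I : Type) (r : seq I) (F : I -> K) :
  absK (\prod_(i <- r) F i) = \prod_(i <- r) absK (F i).
Proof.
elim: r => [|i r ih]; first by rewrite !big_nil abs1.
by rewrite !big_cons absM ih.
Qed.

Lemma absX x n : absK (x ^+ n) = absK x ^+ n.
Proof. by elim: n => [|n ih]; rewrite ?expr0 ?abs1 // !exprS absM ih. Qed.

Lemma emb_ex (r : R) : 0 <= r -> exists c : K, absK c = r.
Proof. exact: (@g_emb _ _ _ hG r). Qed.

End AbsSec.

Section NormSec.
Context (R : realType) (K : fieldType) (absK : K -> R) (hG : Good absK).
Context (d : nat) (N : 'rV[K]_d -> R) (hN : is_norm absK N).
Local Notation X := 'rV[K]_d.

Definition ee (i : 'I_d) : X := delta_mx 0 i.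
Definition l1 (x : X) := \sum_i absK (x 0 i).

Lemma N_eq0 (x : X) : N x = 0 -> x = 0. Proof. by case: hN => H _ _; apply: H. Qed.
Lemma NZ (c : K) (x : X) : N (c *: x) = absK c * N x. Proof. by case: hN => _ H _; apply: H. Qed.
Lemma ND (x y : X) : N (x + y) <= N x + N y. Proof. by case: hN => _ _ H; apply: H. Qed.

Lemma N0 : N 0 = 0.
Proof. by rewrite -(scale0r (0 : X)) NZ (abs0 hG) mul0r. Qed.

Lemma NN (x : X) : N (- x) = N x.
Proof. by rewrite -scaleN1r NZ (absN1 hG) mul1r. Qed.

Lemma N_ge0 (x : X) : 0 <= N x.
Proof.
have := ND x (- x); rewrite subrr N0 NN -mulr2n.
by rewrite pmulrn_lge0.
Qed.

Lemma NB (x y : X) : N (x - y) = N (y - x).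
Proof. by rewrite -NN opprB. Qed.

Lemma N_sum (I : Type) (r : seq I) (F : I -> X) :
  N (\sum_(i <- r) F i) <= \sum_(i <- r) N (F i).
Proof.
elim: r => [|i r ih]; first by rewrite !big_nil N0.
by rewrite !big_cons; apply: le_trans (ND _ _) _; rewrite lerD2l.
Qed.

Lemma N_coord (x : X) : N x <= \sum_i absK (x 0 i) * N (ee i).
Proof.
rewrite {1}(row_sum_delta x); apply: le_trans (N_sum _ _) _.
by apply: ler_sum => i _; rewrite NZ.
Qed.

Lemma l1_ge0 (x : X) : 0 <= l1 x.
Proof. by apply: sumr_ge0 => i _; exact: abs_ge0. Qed.

Lemma coord_le_l1 (x : X) (i : 'I_d) : absK (x 0 i) <= l1 x.
Proof.
rewrite /l1 (bigD1 i)//= lerDl; apply: sumr_ge0 => j _; exact: abs_ge0.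
Qed.

Lemma l1Z (c : K) (x : X) : l1 (c *: x) = absK c * l1 x.
Proof.
by rewrite /l1 mulr_sumr; apply: eq_bigr => i _; rewrite mxE (absM hG).
Qed.

Lemma BWvec (u : nat -> X) (B : R) : (forall k i, absK (u k 0 i) <= B) ->
  exists (f : nat -> nat) (a : X), incr f /\
    forall i, to0 (fun k => absK (u (f k) 0 i - a 0 i)).
Proof.
move=> uB.
have H : forall s : seq 'I_d, exists (f : nat -> nat) (a : 'I_d -> K), incr f /\
    forall i, i \in s -> to0 (fun k => absK (u (f k) 0 i - a i)).
  elim=> [|j s [f [a [fi ha]]]].
    by exists id, (fun=> 0); split => //; exact: incr_id.
  have [g [l [gi hl]]] := g_BW hG (fun k => uB (f k) j).
  exists (f \o g), (fun i => if i == j then l else a i); split.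
    exact: incr_comp.
  move=> i; rewrite in_cons; have [->|ij] /= := eqVneq i j; first by [].
  by move=> /ha h; exact: (to0_sub gi h).
have [f [a [fi ha]]] := H (enum 'I_d).
exists f, (\row_i a i); split => // i.
by under eq_fun do rewrite mxE; apply: ha; rewrite mem_enum.
Qed.

Lemma l1_le : exists2 C, 0 < C & forall x, l1 x <= C * N x.
Proof.
have [//|nC] := pselect (exists2 C, 0 < C & forall x, l1 x <= C * N x).
have h : forall k : nat, exists x, k.+1%:R * N x < l1 x.
  move=> k; apply: contra_notP nC => hk; exists k.+1%:R => // x.
  by rewrite leNgt; apply/negP => hx; apply: hk; exists x.
have [xs hxs] := choice h.
have l1pos k : 0 < l1 (xs k).
  by apply: le_lt_trans (hxs k); rewrite mulr_ge0// N_ge0.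
have lpos' k : 0 <= (l1 (xs k))^-1 by rewrite invr_ge0 ltW.
have [cs hcs] := choice (fun k => emb_ex hG (lpos' k)).
pose ys k := cs k *: xs k.
have l1y k : l1 (ys k) = 1 by rewrite l1Z hcs mulVf// gt_eqF.
have Ny k : N (ys k) <= (k.+1%:R)^-1.
  rewrite NZ hcs ler_pdivrMl// ler_pdivlMr ?ltr0Sn//.
  by rewrite mulrC; apply: ltW.
have yB : forall k i, absK (ys k 0 i) <= 1.
  by move=> k i; rewrite -(l1y k); exact: coord_le_l1.
have [f [a [fi ha]]] := BWvec yB.
have Na : N a = 0.
  apply/le_anti; rewrite N_ge0 andbT.
  apply: (@to0_ge _ (fun k => \sum_i absK (ys (f k) 0 i - a 0 i) * N (ee i)
           + ((f k).+1%:R)^-1)).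
    move=> k; apply: le_trans (_ : N a <= N (a - ys (f k)) + N (ys (f k))) _.
      by have := ND (a - ys (f k)) (ys (f k)); rewrite subrK.
    apply: lerD; last exact: Ny.
    apply: le_trans (N_coord _) _; apply: ler_sum => i _.
    by rewrite !mxE (absB hG) lexx.
  apply: to0D; last exact: (to0_sub fi (@to0_inv R)).
  apply: to0_sum => i.
  by apply: to0_le (to0M (N_ge0 (ee i)) (ha i)) => k; rewrite mulrC lexx.
have a0 := N_eq0 Na.
have : to0 (fun k => l1 (ys (f k))).
  rewrite /l1; apply: to0_sum => i.
  apply: to0_le (ha i) => k; rewrite a0.
  by rewrite (_ : (0 : 'rV[K]_d) 0 i = 0) ?mxE // subr0 lexx.
move=> /(to0_ge (c := 1)) H1.
have : forall k, 1 <= l1 (ys (f k)) by move=> k; rewrite l1y.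
by move/H1; rewrite ler10.
Qed.

End NormSec.

Section LinOf.
Context (K : fieldType) (d : nat).
Definition lin_of (a : 'rV[K]_d) (x : 'rV[K]_d) : K := \sum_i x 0 i * a 0 i.
Lemma lin_of_is_linear a : linear_for *%R (lin_of a).
Proof.
move=> c x y; rewrite /lin_of mulr_sumr -big_split /=.
by apply: eq_bigr => i _; rewrite !mxE mulrDl mulrA.
Qed.
HB.instance Definition _ a := GRing.isLinear.Build K 'rV[K]_d K _ (lin_of a)
  (lin_of_is_linear a).
Definition lin (a : 'rV[K]_d) : {scalar 'rV[K]_d} := lin_of a.
Lemma linE a x : lin a x = \sum_i x 0 i * a 0 i. Proof. by []. Qed.
Lemma psi_expand (psi : {scalar 'rV[K]_d}) x :
  psi x = \sum_i x 0 i * psi (delta_mx 0 i).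
Proof.
rewrite {1}(row_sum_delta x) linear_sum; apply: eq_bigr => i _.
by rewrite linearZ.
Qed.
End LinOf.

Section Func.
Context (R : realType) (K : fieldType) (absK : K -> R) (hG : Good absK).
Context (d : nat) (N : 'rV[K]_d -> R) (hN : is_norm absK N).
Context (hd : (0 < d)%N) (C : R) (C0 : 0 < C)
  (hC : forall x, l1 absK x <= C * N x).
Local Notation X := 'rV[K]_d.
Local Notation sn := (supnorm absK N).
Local Notation ee := (@ee K d).
Let Img (f : X -> K) := [set absK (f x) | x in unit_sphere N].

Let Nge0 (x : X) : 0 <= N x. Proof. exact: (N_ge0 hG hN). Qed.
Let NZ' (c : K) (x : X) : N (c *: x) = absK c * N x. Proof. exact: (NZ hN). Qed.
Let Neq0 (x : X) : N x = 0 -> x = 0. Proof. exact: (N_eq0 hN). Qed.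
Let ND' (x y : X) : N (x + y) <= N x + N y. Proof. exact: (ND hN). Qed.
Let ag0 (x : K) : 0 <= absK x. Proof. exact: (abs_ge0 hG). Qed.

Lemma Npos (x : X) : x != 0 -> 0 < N x.
Proof.
move=> x0; rewrite lt_neqAle Nge0 andbT; apply/negP => /eqP h.
by move: x0; rewrite (Neq0 (esym h)) eqxx.
Qed.


Lemma normalize (x : X) : x != 0 -> exists c : K,
  [/\ c != 0, absK c = (N x)^-1 & N (c *: x) = 1].
Proof.
move=> x0; have Nx := Npos x0.
have Ni : 0 <= (N x)^-1 by rewrite invr_ge0 ltW.
have [c hc] := emb_ex hG Ni.
exists c; split.
- apply/negP => /eqP c0; move: hc; rewrite c0 (abs0 hG) => /esym/eqP.
  by rewrite invr_eq0 gt_eqF.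
- exact: hc.
- by rewrite NZ' hc mulVf // gt_eqF.
Qed.

Lemma sphere_ne : exists u : X, N u = 1.
Proof.
pose i0 := Ordinal hd.
have e0 : ee i0 != 0.
  apply/negP => /eqP/matrixP/(_ 0 i0); rewrite !mxE !eqxx /=.
  by move/eqP; rewrite oner_eq0.
have [c [_ _ hc]] := normalize e0.
by exists (c *: ee i0).
Qed.

Lemma Img_ne f : Img f !=set0.
Proof. by have [u hu] := sphere_ne; exists (absK (f u)); exists u. Qed.

Lemma bnd_has_sup (f : X -> K) B : (forall x, N x = 1 -> absK (f x) <= B) ->
  has_sup (Img f).
Proof.
move=> fB; split; first exact: Img_ne.
by exists B => _ [x Sx <-]; apply: fB.
Qed.

Lemma sn_le (f : X -> K) B : (forall x, N x = 1 -> absK (f x) <= B) ->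
  sn f <= B.
Proof.
move=> fB; apply: ge_sup; first exact: Img_ne.
by move=> _ [x Sx <-]; apply: fB.
Qed.

Lemma le_sn (f : X -> K) B x : (forall x, N x = 1 -> absK (f x) <= B) ->
  N x = 1 -> absK (f x) <= sn f.
Proof.
move=> fB Sx; have [_ hub] := bnd_has_sup fB.
by apply: (ub_le_sup hub); exists x.
Qed.

Lemma sn_ge0 (f : X -> K) : 0 <= sn f.
Proof.
have [hs|hs] := pselect (has_sup (Img f)).
  have [u Su] := sphere_ne; apply: le_trans (ag0 (f u)) _.
  by apply: (ub_le_sup hs.2); exists u.
by rewrite /supnorm sup_out.
Qed.

Lemma homog_le (f : X -> K) (n : nat) B :
  (forall c x, f (c *: x) = c ^+ n * f x) ->
  (forall x, N x = 1 -> absK (f x) <= B) ->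
  forall x, absK (f x) <= sn f * N x ^+ n.
Proof.
move=> hf fB x.
have [->|x0] := eqVneq x 0.
  case: n hf => [|n] hf.
    have [u Su] := sphere_ne.
    rewrite expr0 mulr1 -(scale0r u) hf expr0 mul1r.
    exact: (le_sn fB Su).
  rewrite -(scale0r (0:X)) hf expr0n /= mul0r (abs0 hG).
  by apply: mulr_ge0; [exact: sn_ge0 | apply: exprn_ge0; exact: Nge0].
have [c [c0 hc hu]] := normalize x0.
have hx : x = c^-1 *: (c *: x) by rewrite scalerA mulVf ?scale1r.
rewrite {1}hx hf (absM hG) (absX hG) (absV hG) hc invrK mulrC.
apply: ler_wpM2r; first by apply: exprn_ge0; exact: Nge0.
exact: (le_sn fB hu).
Qed.

Definition c1 (psi : {scalar X}) := \sum_i absK (psi (ee i)).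
Definition dist (psi phi : {scalar X}) := \sum_i absK (psi (ee i) - phi (ee i)).

Lemma coordle (x : X) i : absK (x 0 i) <= C * N x.
Proof. exact: le_trans (coord_le_l1 hG x i) (hC x). Qed.

Lemma psi_bound (psi : {scalar X}) x : absK (psi x) <= C * N x * c1 psi.
Proof.
rewrite psi_expand; apply: le_trans (abs_sum hG _ _) _.
rewrite /c1 mulr_sumr; apply: ler_sum => i _; rewrite (absM hG).
by apply: ler_wpM2r; [exact: ag0 | exact: coordle].
Qed.

Lemma psi_dist (psi phi : {scalar X}) x :
  absK (psi x - phi x) <= C * N x * dist psi phi.
Proof.
rewrite (psi_expand psi) (psi_expand phi) -sumrB.
apply: le_trans (abs_sum hG _ _) _.
rewrite /dist mulr_sumr; apply: ler_sum => i _; rewrite -mulrBr (absM hG).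
by apply: ler_wpM2r; [exact: ag0 | exact: coordle].
Qed.

Lemma psi_le (psi : {scalar X}) x : absK (psi x) <= sn psi * N x.
Proof.
have := @homog_le psi 1 (C * c1 psi) _ _ x; rewrite expr1; apply.
  by move=> c y; rewrite linearZ expr1.
by move=> y Sy; have := psi_bound psi y; rewrite Sy mulr1.
Qed.

Lemma psi_has_sup (psi : {scalar X}) : forall x, N x = 1 -> absK (psi x) <= C * c1 psi.
Proof. by move=> y Sy; have := psi_bound psi y; rewrite Sy mulr1. Qed.

End Func.

Section Meas.
Context (R : realType) (K : fieldType) (absK : K -> R) (hG : Good absK).
Context (d : nat) (N : 'rV[K]_d -> R) (hN : is_norm absK N).
Local Notation X := 'rV[K]_d.

Lemma lip_meas (h : X -> R) (L : R) : 0 <= L ->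
  (forall x y, `|h x - h y| <= L * N (x - y)) ->
  measurable_fun (setT : set (borelX N)) h.
Proof.
move=> L0 hL; apply: (measurability _ (measurable_realfun.RGenOInfty.measurableE R)).
move=> _ [_ [a ->] <-]; apply: sub_sigma_algebra => x [_ /=].
rewrite in_itv /= andbT => ax.
have e0 : 0 < (h x - a) / (L + 1) by rewrite divr_gt0 ?subr_gt0 ?ltr_wpDl.
exists ((h x - a) / (L + 1)); split => // y /= Nyx; split => //=.
rewrite in_itv /= andbT.
have h1 : h x - h y <= L * N (y - x).
  by apply: le_trans (ler_norm _) _; rewrite -(NB hG hN) hL.
have h2 : L * N (y - x) <= (L + 1) * N (y - x).
  by apply: ler_wpM2r; [exact: (N_ge0 hG hN) | rewrite lerDl].
have h3 : (L + 1) * N (y - x) < h x - a.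
  by rewrite mulrC -ltr_pdivlMr ?ltr_wpDl.
lra.
Qed.

End Meas.

Section fM.
Context (R : realType).

Definition fM (m : nat) (t : R) := ln (Num.max t (expR (- m%:R))).

Lemma maxdist (s t c : R) : `|Num.max s c - Num.max t c| <= `|s - t|.
Proof.
have h1 := ler_norm (s - t); have h2 := ler_norm (t - s).
rewrite distrC in h2.
by case: (leP s c) => hs; case: (leP t c) => ht; rewrite ler_norml;
  apply/andP; split; lra.
Qed.

Lemma ln_lip1 (a b c : R) : 0 < c -> c <= a -> c <= b ->
  ln a - ln b <= `|a - b| / c.
Proof.
move=> c0 ca cb.
have a0 : 0 < a by apply: lt_le_trans ca.
have b0 : 0 < b by apply: lt_le_trans cb.
rewrite -ln_div ?posrE//.
have -> : a / b = 1 + (a / b - 1) by rewrite addrC subrK.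
apply: le_trans (le_ln1Dx _) _.
  have : 0 < a / b by rewrite divr_gt0.
  lra.
have -> : a / b - 1 = (a - b) / b by rewrite mulrBl divff ?gt_eqF.
apply: le_trans (ler_norm _) _; rewrite normrM normfV (gtr0_norm b0).
apply: ler_wpM2l; first exact: normr_ge0.
by rewrite lef_pV2 ?posrE.
Qed.

Lemma ln_lip (a b c : R) : 0 < c -> c <= a -> c <= b ->
  `|ln a - ln b| <= `|a - b| / c.
Proof.
move=> c0 ca cb; rewrite ler_norml; apply/andP; split.
  by rewrite lerNl opprB distrC ln_lip1.
exact: ln_lip1.
Qed.

Lemma fM_lip m (s t : R) : `|fM m s - fM m t| <= expR m%:R * `|s - t|.
Proof.
have d0 : 0 < expR (- m%:R : R) by exact: expR_gt0.
rewrite /fM.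
have ha : expR (- m%:R) <= Num.max s (expR (- m%:R)) by rewrite le_max lexx orbT.
have hb : expR (- m%:R) <= Num.max t (expR (- m%:R)) by rewrite le_max lexx orbT.
apply: le_trans (ln_lip d0 ha hb) _.
rewrite expRN invrK mulrC; apply: ler_wpM2l; first exact: expR_ge0.
exact: maxdist.
Qed.

Lemma fM_ge m t : - m%:R <= fM m t.
Proof.
rewrite /fM -{1}(expRK (- m%:R)) ler_ln ?posrE ?expR_gt0 ?lt_max ?expR_gt0 ?orbT//.
by rewrite le_max lexx orbT.
Qed.

Lemma fM_le1 m t : t <= 1 -> fM m t <= 0.
Proof.
move=> t1; rewrite /fM; apply: ln_le0; rewrite ge_max t1 /= expR_le1.
by rewrite oppr_le0.
Qed.

Lemma expR_fM m t : expR (fM m t) = Num.max t (expR (- m%:R)).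
Proof. by rewrite /fM lnK // posrE lt_max expR_gt0 orbT. Qed.

Lemma elog_fM m t : 0 <= t ->
  maxe (elog t) (- (m%:R)%:E)%E = (fM m t)%:E.
Proof.
move=> t0; rewrite /elog; have [->|tn0] := eqVneq t 0.
  by rewrite maxNye /fM max_r ?expR_ge0 // expRK.
have tp : 0 < t by rewrite lt_neqAle eq_sym tn0.
rewrite (_ : (- (m%:R)%:E)%E = (- m%:R)%:E) // -EFin_max; congr (_%:E).
rewrite /fM.
case: (leP t (expR (- m%:R))) => h.
  rewrite expRK max_r //.
  by rewrite -{1}(expRK (- m%:R)) ler_ln ?posrE ?expR_gt0.
rewrite max_l //.
by rewrite -{1}(expRK (- m%:R)) ler_ln ?posrE ?expR_gt0 // ltW.
Qed.

End fM.

Section Integ.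
Context (R : realType) (K : fieldType) (absK : K -> R) (hG : Good absK).
Context (d : nat) (N : 'rV[K]_d -> R) (hN : is_norm absK N).
Context (hd : (0 < d)%N) (C : R) (C0 : 0 < C)
  (hC : forall x, l1 absK x <= C * N x).
Context (mu : {measure set (borelX N) -> \bar R}) (Kset : set (borelX N))
  (mK : measurable Kset) (Kball : Kset `<=` unit_ball N)
  (muK : mu Kset = 1%E).
Local Notation X := 'rV[K]_d.
Local Notation sn := (supnorm absK N).

Definition hM (m : nat) (psi : {scalar X}) : X -> R :=
  fun x => fM m (absK (psi x)).

Lemma hM_lip m (psi : {scalar X}) x y :
  `|hM m psi x - hM m psi y| <= (expR m%:R * (C * c1 absK psi)) * N (x - y).
Proof.
apply: le_trans (fM_lip _ _ _) _.
rewrite -mulrA; apply: ler_wpM2l; first exact: expR_ge0.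
apply: le_trans (abs_revtri hG _ _) _.
rewrite -linearB mulrAC.
exact: (psi_bound hG hC).
Qed.

Lemma hM_meas m (psi : {scalar X}) : measurable_fun (setT : set (borelX N)) (hM m psi).
Proof.
apply: (lip_meas hG hN (L := expR m%:R * (C * c1 absK psi))).
  apply: mulr_ge0; first exact: expR_ge0.
  by apply: mulr_ge0; [exact: ltW | apply: sumr_ge0 => i _; exact: abs_ge0].
exact: hM_lip.
Qed.

Lemma Kle1 (psi : {scalar X}) x : sn psi = 1 -> Kset x -> absK (psi x) <= 1.
Proof.
move=> s1 Kx; apply: le_trans (psi_le hG hN hd hC psi x) _.
by rewrite s1 mul1r; exact: (Kball Kx).
Qed.

Lemma bounded_K (f : X -> R) (B : R) : (forall x, Kset x -> `|f x| <= B) ->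
  [bounded f x | x in Kset].
Proof.
move=> fB; exists B; split; first exact: num_real.
by move=> M hM x Kx /=; apply: le_trans (fB x Kx) (ltW hM).
Qed.

Lemma hM_int m (psi : {scalar X}) : sn psi = 1 -> mu.-integrable Kset (EFin \o hM m psi).
Proof.
move=> s1; apply: measurable_bounded_integrable => //.
- by rewrite muK ltry.
- exact: measurable_funS measurableT (@subsetT _ _) (hM_meas m psi).
apply: (bounded_K (B := m%:R)) => x Kx.
have h1 := fM_ge m (absK (psi x)).
have h2 := fM_le1 m (Kle1 s1 Kx).
rewrite /hM ler_norml; apply/andP; split; lra.
Qed.

Lemma gtrunc_E m (psi : {scalar X}) :
  glog_trunc absK mu Kset m psi = (\int[mu]_(x in Kset) (hM m psi x)%:E)%E.
Proof.
apply: eq_integral => x _; rewrite elog_fM //; exact: abs_ge0.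
Qed.

Lemma int_le_shift (f g : X -> R) (L : R) :
  mu.-integrable Kset (EFin \o f) -> mu.-integrable Kset (EFin \o g) ->
  (forall x, Kset x -> f x <= g x + L) ->
  (\int[mu]_(x in Kset) (f x)%:E <= \int[mu]_(x in Kset) (g x)%:E + L%:E)%E.
Proof.
move=> intf intg fg.
have icst : mu.-integrable Kset (EFin \o (fun=> L)).
  apply: measurable_bounded_integrable => //.
  - by rewrite muK ltry.
  by apply: (bounded_K (B := `|L|)).
apply: le_trans (le_integral mK intf (integrableD mK intg icst) _) _.
  by move=> x /set_mem Kx /=; rewrite lee_fin fg.
rewrite (integralD_EFin mK intg icst).
by rewrite (integral_cst mu mK L%:E) muK mule1.
Qed.

End Integ.

Lemma le_eps (R : realType) (x y : R) : (forall e, 0 < e -> x <= y + e) -> x <= y.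
Proof. by move=> h; apply/ler_addgt0Pr. Qed.

Lemma max2_le (R : realType) (a q c : R) : 0 <= a <= 1 -> 0 <= q <= 1 ->
  0 < c <= 1 -> Num.max a c * Num.max q c <= Num.max (a * q) c.
Proof.
move=> /andP[a0 a1] /andP[q0 q1] /andP[c0 c1].
case: (leP a c) => ha; case: (leP q c) => hq; rewrite le_max; apply/orP.
- by right; nra.
- by right; nra.
- by right; nra.
- by left; rewrite lexx.
Qed.

Lemma prod_max (R : realType) (I : Type) (r : seq I) (a : I -> R) (c : R) :
  (forall i, 0 <= a i <= 1) -> 0 < c <= 1 ->
  \prod_(i <- r) Num.max (a i) c <= Num.max (\prod_(i <- r) a i) c.
Proof.
move=> ha hc; elim: r => [|i r ih].
  by rewrite !big_nil le_max lexx.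
rewrite !big_cons; apply: le_trans (max2_le (ha i) _ hc).
  apply: ler_wpM2l; first by rewrite le_max; case/andP: (ha i) => -> _.
  exact: ih.
apply/andP; split; first by apply: prodr_ge0 => j _; case/andP: (ha j).
by apply: prodr_ile1 => j _; exact: ha.
Qed.

Section Core.
Context (R : realType) (K : fieldType) (absK : K -> R) (hG : Good absK).
Context (d : nat) (N : 'rV[K]_d -> R) (hN : is_norm absK N).
Context (hd : (0 < d)%N) (C : R) (C0 : 0 < C)
  (hC : forall x, l1 absK x <= C * N x).
Context (mu : {measure set (borelX N) -> \bar R}) (Kset : set (borelX N))
  (mK : measurable Kset) (Kball : Kset `<=` unit_ball N)
  (muK : mu Kset = 1%E) (hadm : admissible absK mu Kset).
Local Notation X := 'rV[K]_d.
Local Notation sn := (supnorm absK N).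
Local Notation dist := (dist absK).

Let hMint m (psi : {scalar X}) (s1 : sn psi = 1) :=
  hM_int hG hN hd C0 hC mK Kball muK m s1.

Definition gr (psi : {scalar X}) := fine (glog absK mu Kset psi).
Definition gMr m (psi : {scalar X}) := fine (glog_trunc absK mu Kset m psi).

Lemma gMr_E m (psi : {scalar X}) : sn psi = 1 ->
  glog_trunc absK mu Kset m psi = (gMr m psi)%:E.
Proof.
move=> s1; rewrite /gMr fineK // gtrunc_E //.
exact: (integrable_fin_num mK (hMint m s1)).
Qed.

Lemma gr_E (psi : {scalar X}) : sn psi = 1 ->
  glog absK mu Kset psi = (gr psi)%:E.
Proof. by move=> s1; rewrite /gr fineK //; apply: hadm.1. Qed.

Lemma adm_real e : 0 < e -> exists M : nat, forall m, (M <= m)%N ->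
  forall psi : {scalar X}, sn psi = 1 -> `|gMr m psi - gr psi| < e.
Proof.
move=> e0; have [M HM] := hadm.2 e e0; exists M => m Mm psi s1.
by have := HM m Mm psi s1; rewrite gMr_E // gr_E // -EFinB abse_EFin lte_fin.
Qed.

Lemma gM_lip m (psi phi : {scalar X}) : sn psi = 1 -> sn phi = 1 ->
  gMr m psi <= gMr m phi + expR m%:R * C * dist psi phi.
Proof.
move=> s1 s2.
suff H : forall x, Kset x ->
    hM absK m psi x <= hM absK m phi x + expR m%:R * C * dist psi phi.
  have := int_le_shift mK muK (hMint m s1) (hMint m s2) H.
  rewrite -(gtrunc_E hG mu Kset m psi) -(gtrunc_E hG mu Kset m phi).
  by rewrite gMr_E // gMr_E // -EFinD lee_fin.
move=> x Kx; rewrite /hM.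
have h1 := fM_lip m (absK (psi x)) (absK (phi x)).
have h2 := abs_revtri hG (psi x) (phi x).
have h3 := psi_dist hG hC psi phi x.
have h4 : N x <= 1 := Kball Kx.
have h5 : 0 <= dist psi phi by apply: sumr_ge0 => i _; exact: abs_ge0.
have h6 := N_ge0 hG hN x.
have h7 := expR_ge0 (m%:R : R).
have : fM m (absK (psi x)) - fM m (absK (phi x)) <= expR m%:R * C * dist psi phi.
  apply: le_trans (ler_norm _) _; apply: le_trans h1 _.
  rewrite -mulrA; apply: ler_wpM2l => //.
  apply: le_trans h2 _; apply: le_trans h3 _.
  have := ler_wpM2r h5 (ler_wpM2l (ltW C0) h4).
  by rewrite mulr1.
lra.
Qed.

Lemma g_ucont e : 0 < e -> exists2 del, 0 < del &
  forall psi phi : {scalar X}, sn psi = 1 -> sn phi = 1 ->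
    dist psi phi < del -> gr psi <= gr phi + e.
Proof.
move=> e0; have e30 : 0 < e / 3 by rewrite divr_gt0.
have [M HM] := adm_real e30.
have L0 : 0 < expR M%:R * C by rewrite mulr_gt0 // expR_gt0.
exists (e / 3 / (expR M%:R * C)); first by rewrite divr_gt0.
move=> psi phi s1 s2 hd'.
have h1 := HM M (leqnn M) psi s1; have h2 := HM M (leqnn M) phi s2.
have h3 := gM_lip M s1 s2.
have h4 : expR M%:R * C * dist psi phi < e / 3.
  by rewrite mulrC -ltr_pdivlMr.
move: h1 h2; rewrite !ltr_norml => /andP[h1 h1'] /andP[h2 h2'].
lra.
Qed.

Local Notation ee := (@ee K d).

Lemma lin_ee (a : X) i : lin a (ee i) = a 0 i.
Proof.
rewrite linE (bigD1 i) //= big1 ?addr0 => [|j ji].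
  by rewrite /ee !mxE !eqxx mul1r.
by rewrite /ee mxE (negbTE ji) andbF mul0r.
Qed.

Let psile (psi : {scalar X}) x : absK (psi x) <= sn psi * N x :=
  psi_le hG hN hd hC psi x.

Lemma seq_compact (u : nat -> {scalar X}) : (forall k, sn (u k) = 1) ->
  exists (f : nat -> nat) (psi : {scalar X}),
    [/\ incr f, sn psi = 1 & to0 (fun k => dist psi (u (f k)))].
Proof.
move=> su.
pose B := \sum_j N (ee j).
have uB : forall k i, absK ((\row_j u k (ee j)) 0 i) <= B.
  move=> k i; rewrite mxE; apply: le_trans (psile (u k) (ee i)) _.
  rewrite su mul1r /B (bigD1 i) //= lerDl.
  by apply: sumr_ge0 => j _; exact: (N_ge0 hG hN).
have [f [a [fi ha]]] := BWvec hG uB.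
pose psi := lin a.
have hdist : to0 (fun k => dist psi (u (f k))).
  change (to0 (fun k => \sum_i absK (psi (ee i) - u (f k) (ee i)))).
  apply: to0_sum => i; apply: to0_le (ha i) => k.
  by rewrite lin_ee mxE (absB hG) lexx.
exists f, psi; split => //.
apply/le_anti/andP; split.
  apply: (sn_le hG hN hd (B := 1)) => x Sx.
  have H : forall k, absK (psi x) - 1 <= C * dist psi (u (f k)).
    move=> k.
    have h1 := absD hG (psi x - u (f k) x) (u (f k) x); rewrite subrK in h1.
    have h2 := psile (u (f k)) x; rewrite su Sx mul1r in h2.
    have h3 := psi_dist hG hC psi (u (f k)) x; rewrite Sx mulr1 in h3.
    lra.
  have := to0_ge H (to0M (ltW C0) hdist); lra.
have hx : forall k, exists x, N x = 1 /\ 1 - (k.+1%:R)^-1 < absK (u (f k) x).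
  move=> k.
  have hs := bnd_has_sup hG hN hd (psi_has_sup hG hC (u (f k))).
  have ek : 0 < (k.+1%:R : R)^-1 by rewrite invr_gt0 ltr0Sn.
  have [e [x Sx <-] He] := sup_adherent ek hs.
  by exists x; split => //; move: He; rewrite -/(supnorm absK N (u (f k))) su.
have [xs hxs] := choice hx.
have H : forall k, 1 - sn psi <= (k.+1%:R)^-1 + C * dist psi (u (f k)).
  move=> k; have [Sx hlt] := hxs k.
  have h1 := absD hG (u (f k) (xs k) - psi (xs k)) (psi (xs k)).
  rewrite subrK in h1.
  have h2 := psile psi (xs k); rewrite Sx mulr1 in h2.
  have h3 := psi_dist hG hC psi (u (f k)) (xs k); rewrite Sx mulr1 (absB hG) in h3.
  move: hlt h1 h2 h3; move: (k.+1%:R^-1) (C * dist psi (u (f k))) => i c.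
  lra.
have := to0_ge H (to0D (@to0_inv R) (to0M (ltW C0) hdist)); lra.
Qed.

Let ag0 (x : K) : 0 <= absK x. Proof. exact: (abs_ge0 hG). Qed.

Lemma sn_scale (f g : X -> K) (c : K) B : (forall x, g x = c * f x) ->
  (forall x, N x = 1 -> absK (f x) <= B) -> sn g = absK c * sn f.
Proof.
move=> hg fB.
have gB : forall x, N x = 1 -> absK (g x) <= absK c * B.
  by move=> x Sx; rewrite hg (absM hG) ler_wpM2l // fB.
apply/le_anti/andP; split.
  apply: (sn_le hG hN hd) => x Sx; rewrite hg (absM hG).
  by apply: ler_wpM2l => //; exact: (le_sn hG hN hd fB Sx).
have [->|c0] := eqVneq c 0.
  by rewrite (abs0 hG) mul0r; exact: (sn_ge0 hG hN hd).
have cp : 0 < absK c by rewrite lt_neqAle ag0 andbT eq_sym (abs_neq0 hG).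
rewrite mulrC -ler_pdivlMr //.
apply: (sn_le hG hN hd) => x Sx; rewrite ler_pdivlMr // mulrC -(absM hG) -hg.
exact: (le_sn hG hN hd gB Sx).
Qed.

Lemma scale_lin (psi : {scalar X}) (c : K) :
  exists phi : {scalar X}, forall x, phi x = c * psi x.
Proof.
exists (lin (c *: \row_j psi (ee j))) => x.
rewrite linE (psi_expand psi x) mulr_sumr; apply: eq_bigr => i _.
by rewrite !mxE mulrCA.
Qed.

Lemma normalize_psi (psi : {scalar X}) : 0 < sn psi ->
  exists phi : {scalar X}, exists c : K,
    [/\ sn phi = 1, absK c = (sn psi)^-1 & forall x, phi x = c * psi x].
Proof.
move=> sp; have sp' : 0 <= (sn psi)^-1 by rewrite invr_ge0 ltW.
have [c hc] := emb_ex hG sp'.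
have [phi hphi] := scale_lin psi c.
exists phi, c; split => //.
rewrite (sn_scale hphi (psi_has_sup hG hC psi)) hc mulVf //.
by rewrite gt_eqF.
Qed.

Lemma exists_S : exists psi : {scalar X}, sn psi = 1.
Proof.
pose i0 := Ordinal hd.
pose psi0 := lin (\row_j ((j == i0)%:R : K)).
have e0 : ee i0 != 0.
  apply/negP => /eqP/matrixP/(_ 0 i0); rewrite !mxE !eqxx /=.
  by move/eqP; rewrite oner_eq0.
have [c [c0 _ hu]] := normalize hG hN e0.
have hp : psi0 (c *: ee i0) = c by rewrite linearZ lin_ee mxE eqxx /= ?mulr1n ?mulr1.
have sp : 0 < sn psi0.
  apply: lt_le_trans (_ : 0 < absK c) _.
    by rewrite lt_neqAle ag0 andbT eq_sym (abs_neq0 hG).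
  rewrite -{1}hp.
  exact: (le_sn hG hN hd (psi_has_sup hG hC psi0) hu).
by have [phi [c' [s1 _ _]]] := normalize_psi sp; exists phi.
Qed.

Lemma min_exists : exists psi0 : {scalar X}, sn psi0 = 1 /\
  forall psi : {scalar X}, sn psi = 1 -> gr psi0 <= gr psi.
Proof.
have lb : exists m0, forall psi : {scalar X}, sn psi = 1 -> m0 <= gr psi.
  have [//|nlb] := pselect (exists m0, forall psi : {scalar X}, sn psi = 1 -> m0 <= gr psi).
  exfalso.
  have h : forall k : nat, exists psi : {scalar X}, sn psi = 1 /\ gr psi < - k%:R.
    move=> k; apply: contra_notP nlb => hk; exists (- k%:R) => psi s1.
    by rewrite leNgt; apply/negP => hlt; apply: hk; exists psi.
  have [u hu] := choice h.
  have [f [ps [fi s1 hdist]]] := seq_compact (fun k => (hu k).1).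
  have [del del0 Hd] := g_ucont (@ltr01 R).
  have [M HM] := hdist del del0.
  pose k := maxn M (Num.truncn `|gr ps|).+2.
  have H1 := Hd ps (u (f k)) s1 (hu (f k)).1 (HM k (leq_maxl _ _)).
  have H2 := (hu (f k)).2.
  have hk1 : ((Num.truncn `|gr ps|).+2%:R : R) <= (f k)%:R.
    by rewrite ler_nat; apply: leq_trans (leq_maxr _ _) (incr_ge fi k).
  have hk : `|gr ps| + 1 < (f k)%:R.
    apply: lt_le_trans hk1; rewrite -natr1 ltrD2r; exact: truncnS_gt.
  have t2 := ler_norm (- gr ps); rewrite normrN in t2.
  move: hk t2 H1 H2; move: ((f k)%:R : R) (`|gr ps|) => F A.
  lra.
have [m0 hm0] := lb.
pose E := [set - gr psi | psi in [set psi : {scalar X} | sn psi = 1]].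
have hE : has_sup E.
  split; first by have [psi s1] := exists_S; exists (- gr psi); exists psi.
  by exists (- m0) => _ [psi s1 <-]; rewrite lerN2; apply: hm0.
pose m := - sup E.
have lower : forall psi : {scalar X}, sn psi = 1 -> m <= gr psi.
  move=> psi s1; rewrite /m lerNl; apply: (ub_le_sup hE.2); exists psi => //.
have approx : forall k : nat, exists psi : {scalar X},
    sn psi = 1 /\ gr psi < m + (k.+1%:R)^-1.
  move=> k; have ek : 0 < (k.+1%:R : R)^-1 by rewrite invr_gt0 ltr0Sn.
  have [_ [psi s1 <-] He] := sup_adherent ek hE.
  by exists psi; split => //; rewrite /m; move: He; move: (k.+1%:R^-1) => i; lra.
have [u hu] := choice approx.
have [f [ps [fi s1 hdist]]] := seq_compact (fun k => (hu k).1).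
exists ps; split => // psi spsi; apply: le_trans (lower psi spsi).
apply: le_eps => e e0; have e20 : 0 < e / 2 by rewrite divr_gt0.
have [del del0 Hd] := g_ucont e20.
have [M1 HM1] := hdist del del0.
have [M2 HM2] := to0_sub fi (@to0_inv R) e20.
pose k := maxn M1 M2.
have H1 := Hd ps (u (f k)) s1 (hu (f k)).1 (HM1 k (leq_maxl _ _)).
have H2 := (hu (f k)).2.
have H3 := HM2 k (leq_maxr _ _); rewrite /= in H3.
move: H1 H2 H3; move: ((f k).+1%:R^-1) => i; lra.
Qed.

Lemma int_le_const (f : X -> R) (L : R) :
  mu.-integrable Kset (EFin \o f) -> (forall x, Kset x -> f x <= L) ->
  (\int[mu]_(x in Kset) (f x)%:E <= L%:E)%E.
Proof.
move=> intf fL.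
have icst : mu.-integrable Kset (EFin \o (fun=> L)).
  apply: measurable_bounded_integrable => //.
  - by rewrite muK ltry.
  by apply: (bounded_K (B := `|L|)).
apply: le_trans (le_integral mK intf icst _) _.
  by move=> x /set_mem Kx /=; rewrite lee_fin fL.
by rewrite (integral_cst mu mK L%:E) muK mule1.
Qed.

Lemma prod_main n (ps : 'I_n -> {scalar X}) m0 :
  (forall i, sn (ps i) = 1) -> (forall i, m0 <= gr (ps i)) ->
  expR (n%:R * m0) <= sn (fun x => \prod_i ps i x).
Proof.
move=> s1 hm.
pose P := fun x => \prod_i ps i x.
have PB : forall x, N x = 1 -> absK (P x) <= 1.
  move=> x Sx; rewrite /P (abs_prod hG); apply: prodr_ile1 => i _.
  by rewrite ag0 /=; have := psile (ps i) x; rewrite s1 Sx mulr1.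
have Phom : forall c x, P (c *: x) = c ^+ n * P x.
  move=> c x; rewrite /P.
  rewrite (eq_bigr (fun i => c * ps i x)); last by move=> i _; rewrite linearZ.
  by rewrite big_split /= prodr_const card_ord.
have sP0 : 0 <= sn P := sn_ge0 hG hN hd P.
have Pxle : forall x, Kset x -> absK (P x) <= sn P.
  move=> x Kx; apply: le_trans (homog_le hG hN hd Phom PB x) _.
  rewrite -[leRHS](mulr1 (sn P)); apply: ler_wpM2l => //.
  by apply: exprn_ile1; [exact: (N_ge0 hG hN) | exact: (Kball Kx)].
have key : forall e, 0 < e -> exists M : nat, forall m, (M <= m)%N ->
    n%:R * m0 <= ln (Num.max (sn P) (expR (- m%:R))) + n%:R * e.
  move=> e e0; have [M HM] := adm_real e0; exists M => m Mm.
  have h1 : n%:R * m0 <= \sum_i gr (ps i).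
    have -> : n%:R * m0 = \sum_(i < n) m0 by rewrite sumr_const card_ord mulr_natl.
    by apply: ler_sum => i _; exact: hm.
  have h2 : \sum_i gr (ps i) <= \sum_i gMr m (ps i) + n%:R * e.
    have -> : n%:R * e = \sum_(i < n) e by rewrite sumr_const card_ord mulr_natl.
    rewrite -big_split /=.
    apply: ler_sum => i _; have := HM m Mm (ps i) (s1 i).
    by rewrite ltr_norml => /andP[ha hb]; lra.
  have hint : forall i, mu.-integrable Kset (EFin \o hM absK m (ps i)).
    by move=> i; exact: hMint.
  have h3 : \sum_i gMr m (ps i) <= ln (Num.max (sn P) (expR (- m%:R))).
    rewrite -lee_fin -sumEFin.
    rewrite (eq_bigr (fun i => \int[mu]_(x in Kset) (hM absK m (ps i) x)%:E)%E);
      last by move=> i _; rewrite -gMr_E // gtrunc_E.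
    rewrite -(integral_sum mK hint).
    have -> : (fun x => \sum_i (EFin \o hM absK m (ps i)) x)%E =
              (EFin \o (fun x => \sum_i hM absK m (ps i) x)).
      by apply/funext => x /=; rewrite sumEFin.
    apply: int_le_const.
      have -> : (EFin \o (fun x => \sum_i hM absK m (ps i) x)) =
                (fun x => \sum_i (EFin \o hM absK m (ps i)) x)%E.
        by apply/funext => x /=; rewrite sumEFin.
      by apply: integrable_sum => // i _; exact: hint.
    move=> x Kx.
    have dl : 0 < expR (- m%:R : R) <= 1.
      by rewrite expR_gt0 /= expR_le1 oppr_le0.
    have ha : forall i, 0 <= absK (ps i x) <= 1.
      by move=> i; rewrite ag0 /=; apply: (Kle1 hG hN hd hC Kball (s1 i) Kx).
    have hp := prod_max (index_enum 'I_n) ha dl.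
    have hPx : \prod_i absK (ps i x) <= sn P by rewrite -(abs_prod hG); exact: Pxle.
    have mx_pos : 0 < Num.max (sn P) (expR (- m%:R)).
      by rewrite lt_max expR_gt0 orbT.
    rewrite -ler_expR lnK ?posrE // expR_sum.
    rewrite (eq_bigr (fun i => Num.max (absK (ps i x)) (expR (- m%:R))));
      last by move=> i _; rewrite /hM expR_fM.
    apply: le_trans hp _.
    rewrite ge_max !le_max lexx orbT andbT.
    by rewrite hPx.
  lra.
have [sz|sp] := eqVneq (sn P) 0.
  exfalso.
  have [M HM] := key 1 ltr01.
  pose m := maxn M (Num.truncn `|n%:R * m0 - n%:R|).+1.
  have := HM m (leq_maxl _ _).
  rewrite sz max_r ?expR_ge0 // expRK mulr1.
  have hm1 : (`|n%:R * m0 - n%:R| : R) < m%:R.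
    apply: lt_le_trans (truncnS_gt _) _; rewrite ler_nat; exact: leq_maxr.
  have t2 := ler_norm (n%:R - n%:R * m0); rewrite distrC in t2.
  move: hm1 t2; move: (`|n%:R * m0 - n%:R|) (m%:R : R) => A Mr; lra.
have sPp : 0 < sn P by rewrite lt_neqAle eq_sym sp sP0.
rewrite -(lnK sPp) ler_expR.
apply: le_eps => e e0.
have en : 0 < e / n.+1%:R by rewrite divr_gt0 // ltr0Sn.
have [M HM] := key _ en.
pose m := maxn M (Num.truncn `|ln (sn P)|).+1.
have := HM m (leq_maxl _ _).
have hm1 : `|ln (sn P)| < m%:R.
  apply: lt_le_trans (truncnS_gt _) _; rewrite ler_nat; exact: leq_maxr.
have hd' : expR (- m%:R) <= sn P.
  rewrite -{1}(lnK sPp) ler_expR.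
  have := ler_norm (- ln (sn P)); rewrite normrN; lra.
rewrite max_l //.
have : n%:R * (e / n.+1%:R) <= e.
  rewrite mulrA ler_pdivrMr ?ltr0Sn // mulrC.
  by apply: ler_wpM2l; [exact: ltW | rewrite ler_nat].
move: (n%:R * (e / n.+1%:R)) => t; lra.
Qed.

Lemma cn_bound n (ps0 : {scalar X}) :
  (forall psi : {scalar X}, sn psi = 1 -> gr ps0 <= gr psi) ->
  forall ps : 'I_n -> {scalar X},
  \prod_(i < n) sn (ps i) <=
    expR (- (n%:R * gr ps0)) * sn (fun x => \prod_(i < n) ps i x).
Proof.
move=> hmin ps.
have sPge : 0 <= sn (fun x => \prod_(i < n) ps i x) := sn_ge0 hG hN hd _.
have [[i hi]|nz] := pselect (exists i, sn (ps i) = 0).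
  rewrite (bigD1 i) //= hi mul0r.
  by apply: mulr_ge0 => //; exact: expR_ge0.
have pos : forall i, 0 < sn (ps i).
  move=> i; rewrite lt_neqAle (sn_ge0 hG hN hd) andbT eq_sym.
  by apply/eqP => h; apply: nz; exists i.
have [phis hphis] := choice (fun i => normalize_psi (pos i)).
have [cs hcs] := choice hphis.
have s1 : forall i, sn (phis i) = 1 by move=> i; case: (hcs i).
have pm := prod_main s1 (fun i => hmin _ (s1 i)).
have hB : forall x, N x = 1 ->
    absK (\prod_(i < n) ps i x) <= \prod_(i < n) (C * c1 absK (ps i)).
  move=> x Sx; rewrite (abs_prod hG); apply: ler_prod => i _.
  by rewrite ag0 /=; exact: (psi_has_sup hG hC (ps i) Sx).
have eqP' : forall x, \prod_(i < n) phis i x =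
    (\prod_(i < n) cs i) * \prod_(i < n) ps i x.
  move=> x; rewrite -big_split /=; apply: eq_bigr => i _.
  by case: (hcs i) => _ _ ->.
rewrite (sn_scale eqP' hB) (abs_prod hG) in pm.
rewrite (eq_bigr (fun i => (sn (ps i))^-1)) in pm; last first.
  by move=> i _; case: (hcs i).
rewrite prodfV in pm.
have Pp : 0 < \prod_(i < n) sn (ps i) by apply: prodr_gt0 => i _.
have h := ler_wpM2r (ltW Pp) pm.
rewrite mulrAC mulVf ?gt_eqF // mul1r in h.
by rewrite expRN ler_pdivlMl ?expR_gt0.
Qed.

End Core.





Theorem proposition1p6 (R : realType) (K : fieldType) (absK : K -> R)
    (hK : RorC absK) (d : nat) (hd : (0 < d)%N) (N : 'rV[K]_d -> R)
    (hN : is_norm absK N)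
    (Kset : set (borelX N)) (hKmeas : measurable Kset)
    (hKball : Kset `<=` unit_ball N)
    (mu : probability (borelX N) R) (hmuK : mu Kset = 1%E)
    (hadm : admissible absK mu Kset) :
  exists psi0 : {scalar 'rV[K]_d},
    supnorm absK N psi0 = 1 /\
    forall n : nat,
      (cconst absK N n <= (expR (- (n%:R * fine (glog absK mu Kset psi0))))%:E)%E.
Proof.
have hG := RorC_Good hK.
have [C C0 hC] := l1_le hG hN.
have [psi0 [s0 hmin]] := min_exists hG hN hd C0 hC hKmeas hKball hmuK hadm.
exists psi0; split => // n.
apply: ereal_inf_lbound; exists (expR (- (n%:R * fine (glog absK mu Kset psi0)))) => //.
move=> psi; exact: (cn_bound hG hN hd C0 hC hKmeas hKball hmuK hadm hmin psi).
Qed.
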